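(* For every integer $d>1$, $\lambda^*(d,2^{d-1})=1-2^{-d}$.
   Context: For integers $n\ge d\ge 1$, a $d$-flat in $\mathbb{F}_2^n$ is a set $x_0+U$ with $x_0\in\mathbb{F}_2^n$ and $U$ a $d$-dimensional linear subspace of $\mathbb{F}_2^n$. For $A\subseteq\mathbb{F}_2^n$ and an integer $0\le s\le 2^d$, $\lambda^*(n,d,s,A)$ denotes the fraction of $d$-flats $Q$ in $\mathbb{F}_2^n$ with $|Q\cap A|=s$. Let $\lambda^*(n,d,s)=\max_{A\subseteq\mathbb{F}_2^n}\lambda^*(n,d,s,A)$; this is non-increasing in $n$, and $\lambda^*(d,s)=\lim_{n\to\infty}\lambda^*(n,d,s)$. *)

(* Defs.v *)
From HB Require Import structures.
From mathcomp Require Import all_boot all_order all_algebra.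
From mathcomp Require Import all_classical all_reals all_analysis.
From mathcomp Require Import Rstruct Rstruct_topology.
Set Implicit Arguments. Unset Strict Implicit. Unset Printing Implicit Defensive.
Import Order.TTheory GRing.Theory Num.Theory.
Local Open Scope ring_scope.

Notation F2n n := 'rV['F_2]_n.

(* Q is a d-flat: Q = x0 + U with U a d-dimensional linear subspace,
   U given as the row space of a d x n matrix of rank d. *)
Definition is_flat (n d : nat) (Q : {set F2n n}) : bool :=
  [exists x0 : F2n n, exists U : 'M['F_2]_(d, n),
     (\rank U == d) && (Q == [set x0 + v *m U | v : 'rV['F_2]_d])].

Definition flats (n d : nat) : {set {set F2n n}} := [set Q | is_flat d Q].

Definition lambdaA (n d s : nat) (A : {set F2n n}) : Rdefinitions.R :=
  (#|[set Q in flats n d | #|Q :&: A| == s]|)%:R / (#|flats n d|)%:R.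

Definition lambdan (n d s : nat) : Rdefinitions.R :=
  \big[Num.max/0]_(A : {set F2n n}) lambdaA d s A.

(* Main.v *)
Require Import Defs.
From HB Require Import structures.
From mathcomp Require Import all_boot all_order all_algebra.
From mathcomp Require Import all_classical all_reals all_analysis.
From mathcomp Require Import Rstruct Rstruct_topology.
From mathcomp Require Import ring lra.
Import Order.TTheory GRing.Theory Num.Theory.

Module Helpers.
Set Implicit Arguments. Unset Strict Implicit. Unset Printing Implicit Defensive.
Local Open Scope ring_scope.

Section Abstract.
Variables (R : comRingType) (T : finType) (F : {set {set T}}).
Definition cnt2 x y := #|[set Q in F | (x \in Q) && (y \in Q)]|.

Lemma sum_card (P : pred {set T}) :
  \sum_(Q in F) ((P Q)%:R : R) = (#|[set Q in F | P Q]|)%:R.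
Proof.
rewrite -sumr_const [RHS]big_mkcond /= [LHS]big_mkcond /=.
apply: eq_bigr => Q _; rewrite inE; by case: (Q \in F); case: (P Q).
Qed.

Lemma sum_in (Q : {set T}) (h : T -> R) :
  \sum_(x in Q) h x = \sum_x h x * (x \in Q)%:R.
Proof.
rewrite big_mkcond; apply: eq_bigr => x _; by case: (x \in Q); rewrite ?mulr1 ?mulr0.
Qed.

Lemma sum_lin (h : T -> R) :
  \sum_(Q in F) \sum_(x in Q) h x = \sum_x h x * (cnt2 x x)%:R.
Proof.
under eq_bigr => Q _ do rewrite sum_in.
rewrite exchange_big; apply: eq_bigr => x _.
rewrite -mulr_sumr -sum_card; congr (_ * _); apply: eq_bigr => Q _.
by rewrite andbb.
Qed.

Lemma sum_sq (h : T -> R) :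
  \sum_(Q in F) (\sum_(x in Q) h x)^+2 =
  \sum_x \sum_y h x * h y * (cnt2 x y)%:R.
Proof.
transitivity (\sum_(Q in F) \sum_x \sum_y h x * h y * ((x \in Q) && (y \in Q))%:R).
  apply: eq_bigr => Q _; rewrite expr2 (_ : \sum_(x in Q) h x = \sum_x h x * (x \in Q)%:R); last exact: sum_in.
  rewrite mulr_suml; apply: eq_bigr => x _.
  rewrite mulr_sumr; apply: eq_bigr => y _.
  by case: (x \in Q); case: (y \in Q); rewrite /= ?mulr1 ?mulr0 ?mul0r.
rewrite exchange_big; apply: eq_bigr => x _.
rewrite exchange_big; apply: eq_bigr => y _.
by rewrite -mulr_sumr sum_card.
Qed.

Variables (k : nat) (x0 y0 : T).
Hypothesis x0y0 : x0 != y0.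
Hypothesis Hk : forall Q, Q \in F -> #|Q| = k.
Hypothesis H1 : forall x, cnt2 x x = cnt2 x0 x0.
Hypothesis H2 : forall x y, x != y -> cnt2 x y = cnt2 x0 y0.

Lemma sum_sq_const (h : T -> R) :
  \sum_(Q in F) (\sum_(x in Q) h x)^+2 =
  (cnt2 x0 x0)%:R * \sum_x (h x)^+2 +
  (cnt2 x0 y0)%:R * ((\sum_x h x)^+2 - \sum_x (h x)^+2).
Proof.
rewrite sum_sq.
transitivity (\sum_x ((cnt2 x0 x0)%:R * h x ^+2 + (cnt2 x0 y0)%:R * (h x * \sum_y h y - h x ^+2))).
  apply: eq_bigr => x _.
  rewrite (bigD1 x) //= [in RHS](bigD1 x) //= H1.
  rewrite (eq_bigr (fun y => h x * h y * (cnt2 x0 y0)%:R)); last first.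
    by move=> y yx; rewrite H2 // eq_sym.
  rewrite -mulr_suml -mulr_sumr; ring.
rewrite big_split /= -!mulr_sumr sumrB expr2 mulr_suml.
by [].
Qed.

Lemma ident1 : (#|F|)%:R * k%:R = #|T|%:R * (cnt2 x0 x0)%:R :> R.
Proof.
have := sum_lin (fun _ => 1 : R).
under eq_bigr => Q QF do rewrite sumr_const Hk //.
have E2 : \sum_x 1 * (cnt2 x x)%:R = \sum_(x : T) ((cnt2 x0 x0)%:R : R).
  by apply: eq_bigr => x _; rewrite H1 mul1r.
rewrite E2 !sumr_const => E.
by rewrite !mulr_natl E.
Qed.

Lemma ident2 : (#|F|)%:R * k%:R ^+ 2 = (cnt2 x0 x0)%:R * #|T|%:R +
   (cnt2 x0 y0)%:R * (#|T|%:R ^+ 2 - #|T|%:R) :> R.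
Proof.
have := sum_sq_const (fun _ => 1 : R).
under eq_bigr => Q QF do rewrite sumr_const Hk //.
rewrite !expr1n !sumr_const => E.
by rewrite mulr_natl E.
Qed.

Lemma main_abs (h : T -> R) :
  (#|T|%:R * (#|T|%:R - 1)) * \sum_(Q in F) (\sum_(x in Q) h x)^+2 =
  #|F|%:R * k%:R * ((#|T|%:R - 1) * \sum_x (h x)^+2 +
     (k%:R - 1) * ((\sum_x h x)^+2 - \sum_x (h x)^+2)) :> R.
Proof.
have := ident1; have := ident2; rewrite sum_sq_const.
move: (#|F|%:R : R) (k%:R : R) (#|T|%:R : R) ((cnt2 x0 x0)%:R : R) ((cnt2 x0 y0)%:R : R)
  (\sum_x (h x)^+2) (\sum_x h x) => f kk N c1 c2 H S E2 E1.
have -> : N * (N - 1) * (c1 * H + c2 * (S ^+ 2 - H)) =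
  (N - 1) * H * (N * c1) + (S^+2 - H) * (c1 * N + c2 * (N ^+ 2 - N) - N * c1) by ring.
rewrite -E1 -E2; ring.
Qed.
End Abstract.

Lemma rV_ebase (F : fieldType) n (u : 'rV[F]_n) : u != 0 ->
  exists c, exists Rr : 'M[F]_n, (c != 0 /\ (Rr \in unitmx /\ u = c *: (pid_mx 1 *m Rr))).
Proof.
move=> u0; exists (col_ebase u 0 0), (row_ebase u); split; [|split].
- by have := col_ebase_unit u; rewrite unitmxE det_mx11 unitfE.
- exact: row_ebase_unit.
- rewrite -{1}(mulmx_ebase u) rank_rV u0 /= {1}[col_ebase u]mx11_scalar.
  by rewrite mul_scalar_mx scalemxAl.
Qed.

Lemma GL_trans (F : fieldType) n (u u' : 'rV[F]_n) : u != 0 -> u' != 0 ->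
  exists M, M \in unitmx /\ u *m M = u'.
Proof.
move=> /rV_ebase [c [Rr [c0 [Ru ->]]]] /rV_ebase [c' [Rr' [c0' [Ru' ->]]]].
exists ((c' / c) *: (invmx Rr *m Rr')); split.
  by rewrite unitmxZ ?unitfE ?mulf_neq0 ?invr_eq0 // unitmx_mul unitmx_inv Ru Ru'.
rewrite -scalemxAl -scalemxAr scalerA mulrC divfK //; congr (_ *: _).
by rewrite -!mulmxA (mulmxA Rr) mulmxV // mul1mx.
Qed.

Lemma real_ub (R : realFieldType) (f g K N : R) : 0 < f -> 1 <= K -> 1 < N ->
  f * (N - K) <= (N - 1) * (f - g) * K -> g / f <= 1 - K^-1 + (N - 1)^-1.
Proof.
move=> f0 K1 N1 H.
rewrite ler_pdivrMr //.
have K0 : K != 0 by apply/eqP => K0; rewrite K0 in K1; lra.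
have N0 : N - 1 != 0 by apply/eqP => N0; lra.
have E : (1 - K^-1 + (N - 1)^-1) * f - g =
  ((N - 1) * (f - g) * K - f * (N - K) + f) / (K * (N - 1)) by field; rewrite K0 N0.
rewrite -subr_ge0 E divr_ge0 //; first lra.
by apply: mulr_ge0; lra.
Qed.

Lemma real_lb (R : realFieldType) (f g K N : R) : 0 < f -> 1 <= K -> 1 < N ->
  f * (N - K) = (N - 1) * (f - g) * K -> 1 - K^-1 <= g / f.
Proof.
move=> f0 K1 N1 H.
rewrite ler_pdivlMr //.
have K0 : 0 < K by lra.
have H1 : (f - g) * K <= f.
  have : (N - 1) * ((f - g) * K) <= (N - 1) * f by rewrite mulrA -H; nra.
  by rewrite ler_pM2l //; lra.
have : f - g <= f / K by rewrite ler_pdivlMr.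
have -> : (1 - K^-1) * f = f - f / K by field; lra.
lra.
Qed.

Lemma fin_bound (R : realFieldType) (P u L eps : R) : 2 <= P -> L <= u ->
  u <= L + (P - 1)^-1 -> 1 / P < eps / 2 -> `|L - u| <= eps.
Proof.
move=> P2 Lu uL He.
have P0 : P != 0 by apply/eqP => P0; rewrite P0 in P2; lra.
have P1 : P - 1 != 0 by apply/eqP => P1; lra.
have H : (P - 1)^-1 <= 2 * (1 / P).
  rewrite -subr_ge0.
  have -> : 2 * (1 / P) - (P - 1)^-1 = (P - 2) / (P * (P - 1)) by field; rewrite P1 P0.
  by apply: divr_ge0; [lra | apply: mulr_ge0; lra].
rewrite distrC ger0_norm; lra.
Qed.

Section Flats.
Variables n d : nat.
Local Notation F := (flats n d).

Lemma flatP (Q : {set F2n n}) : reflect (exists x0 : F2n n, exists U : 'M['F_2]_(d,n),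
   \rank U = d /\ Q = [set x0 + v *m U | v : 'rV['F_2]_d]) (Q \in F).
Proof.
rewrite inE /is_flat.
apply: (iffP existsP) => [[x0 /existsP [U /andP [/eqP r /eqP e]]] | [x0 [U [r e]]]].
  by exists x0, U.
by exists x0; apply/existsP; exists U; rewrite r e !eqxx.
Qed.

Lemma card_F2rV m : #|{: 'rV['F_2]_m}| = expn 2 m.
Proof. by rewrite card_mx card_Fp // mul1n. Qed.

Lemma inj_flat x0 (U : 'M['F_2]_(d,n)) : \rank U = d ->
  injective (fun v : 'rV_d => x0 + v *m U).
Proof.
move=> r v w /addrI; apply: (row_free_inj (A:=U)); by rewrite /row_free r.
Qed.

Lemma flat_card Q : Q \in F -> #|Q| = expn 2 d.
Proof.
case/flatP => x0 [U [r ->]]; rewrite card_imset ?card_F2rV //; exact: inj_flat.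
Qed.

Lemma affine_flat (M : 'M['F_2]_n) b Q : M \in unitmx -> Q \in F ->
  [set x *m M + b | x in Q] \in F.
Proof.
move=> MU /flatP [x0 [U [r ->]]].
apply/flatP; exists (x0 *m M + b), (U *m M); split.
  by rewrite mxrankMfree ?row_free_unit.
rewrite -imset_comp; apply: eq_imset => v /=.
by rewrite mulmxDl mulmxA addrAC.
Qed.

Lemma imsetK (g g' : F2n n -> F2n n) : cancel g g' ->
  cancel (fun Q : {set F2n n} => [set g x | x in Q]) (fun Q => [set g' x | x in Q]).
Proof.
move=> gK Q /=; rewrite -imset_comp.
have -> : [set (g' \o g) x | x in Q] = [set x | x in Q] by apply: eq_imset => x /=; rewrite gK.
by rewrite imset_id.
Qed.

Lemma cnt2_le (g g' : F2n n -> F2n n) (gK : cancel g g')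
  (Hg : forall Q, Q \in F -> [set g x | x in Q] \in F) x y :
  (cnt2 F x y <= cnt2 F (g x) (g y))%N.
Proof.
rewrite /cnt2 -(card_imset _ (can_inj (imsetK gK))).
apply: subset_leq_card; apply/fintype.subsetP => Q' /imsetP [Q].
rewrite inE => /andP [QF /andP [xQ yQ]] ->.
by rewrite inE Hg //= !imset_f.
Qed.

Lemma cnt2_aff (M : 'M['F_2]_n) b x y : M \in unitmx ->
  cnt2 F x y = cnt2 F (x *m M + b) (y *m M + b).
Proof.
move=> MU.
pose g := fun z : F2n n => z *m M + b.
pose g' := fun z : F2n n => z *m invmx M + (- b *m invmx M).
have gK : cancel g g'.
  by move=> z; rewrite /g /g' -mulmxDl addrK mulmxK.
have g'K : cancel g' g.
  by move=> z; rewrite /g /g' -mulmxDl mulmxKV // subrK.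
have Hg : forall Q, Q \in F -> [set g x | x in Q] \in F.
  by move=> Q QF; apply: affine_flat.
have Hg' : forall Q, Q \in F -> [set g' x | x in Q] \in F.
  by move=> Q QF; apply: affine_flat; rewrite ?unitmx_inv.
apply/eqP; rewrite eqn_leq (cnt2_le gK Hg) /=.
by have := cnt2_le g'K Hg' (g x) (g y); rewrite !gK.
Qed.

Lemma cnt2_diag x : cnt2 F x x = cnt2 F 0 0.
Proof.
by rewrite (@cnt2_aff 1%:M (- x) x x (unitmx1 _ _)) mulmx1 subrr.
Qed.

Lemma cnt2_off x y x0 y0 : x != y -> x0 != y0 -> cnt2 F x y = cnt2 F x0 y0.
Proof.
move=> xy x0y0.
have u0 : y - x != 0 by rewrite subr_eq0 eq_sym.
have u0' : y0 - x0 != 0 by rewrite subr_eq0 eq_sym.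
have [M [MU EM]] := GL_trans u0 u0'.
rewrite (@cnt2_aff M (x0 - x *m M) x y MU); congr cnt2.
  by rewrite addrC subrK.
by rewrite -[y0](subrK x0) -EM mulmxBl addrCA addrC.
Qed.

Lemma flats_nonempty : (d <= n)%N -> (0 < #|F|)%N.
Proof.
move=> dn; apply/card_gt0P; exists [set 0 + v *m pid_mx d | v : 'rV['F_2]_d].
by apply/flatP; exists 0, (pid_mx d); split => //; rewrite rank_pid_mx.
Qed.

End Flats.

Local Notation R := Rdefinitions.R.

Lemma F2_cases (a : 'F_2) : a = 0 \/ a = 1.
Proof.
have := ltn_ord a; case: a => [[|[|m]] Hm] _ /=.
- by left; apply: val_inj.
- by right; apply: val_inj.
- by [].
Qed.

Lemma F2_add1 (a : 'F_2) : (a + 1 == 1) = ~~ (a == 1).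
Proof. by case: (F2_cases a) => ->. Qed.


Section Count.
Variables n d : nat.
Local Notation F := (flats n d).

Definition hA (A : {set F2n n}) (x : F2n n) : R := 1 - 2 * (x \in A)%:R.

Lemma hA_sq A x : hA A x ^+ 2 = 1.
Proof. by rewrite /hA; case: (x \in A) => /=; ring. Qed.

Lemma sum_indic (Q A : {set F2n n}) :
  \sum_(x in Q) ((x \in A)%:R : R) = #|Q :&: A|%:R.
Proof.
rewrite -sumr_const big_mkcond [RHS]big_mkcond /=; apply: eq_bigr => x _.
by rewrite inE; case: (x \in Q); case: (x \in A).
Qed.

Lemma sum_hA_flat A Q : Q \in F ->
  \sum_(x in Q) hA A x = (expn 2 d)%:R - 2 * #|Q :&: A|%:R.
Proof.
move=> QF; rewrite /hA sumrB sumr_const (@flat_card n d) // -mulr_sumr.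
by rewrite (_ : \sum_(x in Q) ((x \in A)%:R : R) = #|Q :&: A|%:R) // sum_indic.
Qed.

Lemma sum_hA_sq A : \sum_x hA A x ^+ 2 = (#|F2n n|)%:R.
Proof. by rewrite (eq_bigr (fun _ => 1)) ?sumr_const // => x _; rewrite hA_sq. Qed.


Variables (hn : (0 < n)%N) (hd : (1 < d)%N) (dn : (d <= n)%N).
Let i0 : 'I_n := Ordinal hn.
Let e : F2n n := delta_mx 0 i0.

Lemma e_neq0 : (0 : F2n n) != e.
Proof.
rewrite eq_sym; apply/eqP => /matrixP /(_ 0 i0); rewrite !mxE !eqxx /=.
by move/eqP; rewrite oner_eq0.
Qed.

Lemma main_app (h : F2n n -> R) :
 (#|F2n n|%:R * (#|F2n n|%:R - 1)) * \sum_(Q in F) (\sum_(x in Q) h x)^+2 =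
  #|F|%:R * (expn 2 d)%:R * ((#|F2n n|%:R - 1) * \sum_x (h x)^+2 +
     ((expn 2 d)%:R - 1) * ((\sum_x h x)^+2 - \sum_x (h x)^+2)).
Proof.
apply: (@main_abs R (F2n n) F (expn 2 d) 0 e).
- by move=> Q QF; apply: (@flat_card n d).
- by move=> x; apply: cnt2_diag.
- by move=> x y xy; apply: cnt2_off => //; exact: e_neq0.
Qed.

Lemma Ek : ((expn 2 d)%:R : R) = 2^+d.
Proof. by rewrite natrX. Qed.
Lemma EN : (#|F2n n|%:R : R) = 2^+n.
Proof. by rewrite card_F2rV natrX. Qed.
Lemma Hs : ((expn 2 d)%:R : R) = 2 * (expn 2 d.-1)%:R.
Proof. by rewrite -natrM -expnS prednK // ltnW. Qed.


Lemma key_ub (f g K N S T2 : R) : 0 <= f -> 1 <= K -> 1 < N -> 0 <= T2 ->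
  N * (N - 1) * S = f * K * ((N - 1) * N + (K - 1) * (T2 - N)) ->
  S <= (f - g) * K ^+ 2 ->
  f * (N - K) <= (N - 1) * (f - g) * K.
Proof.
move=> f0 K1 N1 T0 Hm Hle.
have KN : 0 < K * N by apply: mulr_gt0; lra.
rewrite -(ler_pM2l KN).
have E1 : K * N * (f * (N - K)) = f * K * ((N - 1) * N + (K - 1) * (0 - N)) by ring.
have E2 : K * N * ((N - 1) * (f - g) * K) = N * (N - 1) * ((f - g) * K ^+ 2) by ring.
rewrite E1 E2.
apply: (@le_trans _ _ (f * K * ((N - 1) * N + (K - 1) * (T2 - N)))).
  rewrite -subr_ge0.
  have -> : f * K * ((N - 1) * N + (K - 1) * (T2 - N)) -
    f * K * ((N - 1) * N + (K - 1) * (0 - N)) = f * K * (K - 1) * T2 by ring.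
  apply: mulr_ge0 => //; apply: mulr_ge0; [apply: mulr_ge0|]; lra.
rewrite -Hm; apply: ler_wpM2l => //; apply: mulr_ge0; lra.
Qed.

Lemma lambdaA_ub (A : {set F2n n}) : lambdaA d (expn 2 d.-1) A <= 1 - (2 ^+ d)^-1 + ((2 ^+ n : R) - 1)^-1.
Proof.
rewrite /lambdaA.
set g := #|[set Q in F | _]|.
have f0 : (0 < #|F|)%N := @flats_nonempty n d dn.
have Hm := main_app (hA A); rewrite sum_hA_sq in Hm.
have Hle : \sum_(Q in F) (\sum_(x in Q) hA A x)^+2 <= (#|F|%:R - g%:R) * ((expn 2 d)%:R)^+2.
  apply: (@le_trans _ _ (\sum_(Q in F) (1 - (#|Q :&: A| == expn 2 d.-1)%:R) * ((expn 2 d)%:R)^+2)).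
    apply: ler_sum => Q QF; rewrite sum_hA_flat //.
    have mk : (#|Q :&: A| <= expn 2 d)%N.
      by rewrite -(@flat_card n d Q QF) subset_leq_card // subsetIl.
    have m0 : 0 <= (#|Q :&: A|%:R : R) := ler0n _ _.
    have mK : (#|Q :&: A|%:R : R) <= (expn 2 d)%:R by rewrite ler_nat.
    case: eqP => [Em | _] /=.
      rewrite Em -Hs subrr; lra.
    nra.
  by rewrite -mulr_suml sumrB sumr_const sum_card.
rewrite Ek EN in Hm Hle.
apply: real_ub.
- by rewrite ltr0n.
- by rewrite exprn_ege1 // ler1n.
- by rewrite exprn_egt1 ?ltr1n // -lt0n.
- apply: key_ub Hm Hle; first by rewrite ler0n.
  + by rewrite exprn_ege1 // ler1n.
  + by rewrite exprn_egt1 ?ltr1n // -lt0n.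
  + exact: sqr_ge0.
Qed.


Definition A0 : {set F2n n} := [set x : F2n n | x 0 i0 == 1].

Lemma hA_flip x (u : F2n n) : u 0 i0 = 1 -> hA A0 (x + u) = - hA A0 x.
Proof.
move=> Hu; rewrite /hA !inE mxE Hu F2_add1.
by case: (x 0 i0 == 1) => /=; ring.
Qed.

Lemma sum_flip m (U : 'M['F_2]_(m, n)) (z : F2n n) (w : 'rV_m) : (w *m U) 0 i0 = 1 ->
  \sum_(v : 'rV_m) hA A0 (z + v *m U) = 0.
Proof.
move=> Hw; set S := (\sum_(v : 'rV_m) _).
have : S = - S.
  rewrite {1}/S (reindex_inj (addIr w)) /= -sumrN; apply: eq_bigr => v _.
  by rewrite mulmxDl addrA (hA_flip _ Hw).
lra.
Qed.

Lemma sum_const m (U : 'M['F_2]_(m, n)) (z : F2n n) : (forall w : 'rV_m, (w *m U) 0 i0 = 0) ->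
  \sum_(v : 'rV_m) hA A0 (z + v *m U) = (expn 2 m)%:R * hA A0 z.
Proof.
move=> H; rewrite (eq_bigr (fun _ => hA A0 z)) => [|v _].
  by rewrite sumr_const card_F2rV mulr_natl.
by rewrite /hA !inE mxE H addr0.
Qed.

Lemma flat_sum (x0 : F2n n) (U : 'M['F_2]_(d, n)) : \rank U = d ->
  \sum_(x in [set x0 + v *m U | v : 'rV['F_2]_d]) hA A0 x =
  \sum_(v : 'rV_d) hA A0 (x0 + v *m U).
Proof. by move=> r; rewrite big_imset //; apply: in2W; apply: inj_flat. Qed.


Lemma S_sq Q : Q \in F -> (\sum_(x in Q) hA A0 x)^+2 =
  (1 - (#|Q :&: A0| == expn 2 d.-1)%:R) * ((expn 2 d)%:R)^+2.
Proof.
move=> QF; have ES := sum_hA_flat A0 QF.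
case/flatP: QF => x0 [U [r EQ]].
have ES' : \sum_(v : 'rV_d) hA A0 (x0 + v *m U) =
   (expn 2 d)%:R - 2 * #|Q :&: A0|%:R by rewrite -ES EQ flat_sum.
have -> : \sum_(x in Q) hA A0 x = \sum_(v : 'rV_d) hA A0 (x0 + v *m U)
  by rewrite EQ flat_sum.
have HsR := Hs.
case: (boolP [exists w : 'rV_d, (w *m U) 0 i0 == 1]) => [/existsP [w /eqP Hw] | /existsPn Hn].
  have S0 := sum_flip x0 Hw; rewrite S0 in ES'.
  have Em : #|Q :&: A0| == expn 2 d.-1.
    by rewrite -(eqr_nat R); apply/eqP; lra.
  by rewrite S0 Em /=; ring.
have H' : forall w : 'rV_d, (w *m U) 0 i0 = 0.
  by move=> w; case: (F2_cases ((w *m U) 0 i0)) (Hn w) => -> //; rewrite eqxx.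
rewrite sum_const // in ES' *.
have hz := hA_sq A0 x0.
have Kp : 0 < ((expn 2 d)%:R : R) by rewrite ltr0n expn_gt0.
have ng : (#|Q :&: A0| == expn 2 d.-1) = false.
  apply/negbTE/negP => /eqP Em; rewrite Em -HsR subrr in ES'.
  nra.
by rewrite ng exprMn hz /=; ring.
Qed.

Lemma lambdaA_lb : 1 - (2 ^+ d)^-1 <= lambdaA d (expn 2 d.-1) A0.
Proof.
rewrite /lambdaA.
set g := #|[set Q in F | _]|.
have f0 : (0 < #|F|)%N := @flats_nonempty n d dn.
have Hm := main_app (hA A0); rewrite sum_hA_sq in Hm.
have T0 : \sum_x hA A0 x = 0.
  have He : (e *m 1%:M) 0 i0 = 1 by rewrite mulmx1 mxE !eqxx.
  have := sum_flip 0 He.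
  by under eq_bigr => v _ do rewrite add0r mulmx1.
have ES : \sum_(Q in F) (\sum_(x in Q) hA A0 x)^+2 = (#|F|%:R - g%:R) * ((expn 2 d)%:R)^+2.
  rewrite (eq_bigr _ (fun Q QF => S_sq QF)).
  by rewrite -mulr_suml sumrB sumr_const sum_card.
rewrite T0 ES Ek EN in Hm.
apply: (@real_lb _ _ _ _ (2 ^+ n)).
- by rewrite ltr0n.
- by rewrite exprn_ege1 // ler1n.
- by rewrite exprn_egt1 ?ltr1n // -lt0n.
- set K : R := 2 ^+ d in Hm *; set N : R := 2 ^+ n in Hm *.
  have KN : K * N != 0.
    by rewrite mulf_neq0 // expf_neq0 // pnatr_eq0.
  apply: (mulfI KN).
  have E1 : K * N * (#|F|%:R * (N - K)) =
     #|F|%:R * K * ((N - 1) * N + (K - 1) * (0 ^+ 2 - N)) by ring.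
  rewrite E1 -Hm; ring.
Qed.

End Count.

Lemma lambdan_ub n d : (0 < n)%N -> (1 < d)%N -> (d <= n)%N ->
  lambdan n d (2 ^ d.-1)%N <= 1 - 2 ^- d + ((2 ^+ n : Rdefinitions.R) - 1)^-1.
Proof.
move=> hn hd dn; rewrite /lambdan.
apply: bigmax_le => [|A _]; last exact: lambdaA_ub.
have P2 : (2 : Rdefinitions.R) <= 2 ^+ n.
  by rewrite -natrX ler_nat -{1}(expn1 2) leq_exp2l.
have K1 : (1 : Rdefinitions.R) <= 2 ^+ d by rewrite exprn_ege1 // ler1n.
have : (2 ^+ d : Rdefinitions.R)^-1 <= 1 by rewrite invr_le1 // ?unitfE; lra.
have : 0 <= ((2 ^+ n : Rdefinitions.R) - 1)^-1 by rewrite invr_ge0; lra.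
lra.
Qed.

Lemma lambdan_lb n d : (0 < n)%N -> (1 < d)%N -> (d <= n)%N ->
  1 - 2 ^- d <= lambdan n d (2 ^ d.-1)%N.
Proof.
move=> hn hd dn; rewrite /lambdan.
apply: le_trans (lambdaA_lb hn hd dn) _.
exact: le_bigmax.
Qed.


End Helpers.
Import Helpers.

Local Open Scope classical_set_scope.
Local Open Scope ring_scope.

Theorem theorem1p4 (d : nat) (hd : (1 < d)%N) :
  (fun n : nat => lambdan n d (2 ^ d.-1)%N) @ \oo --> (1 - 2 ^- d : Rdefinitions.R).
Proof.
apply/(@cvgrPdist_le Rdefinitions.R Rdefinitions.R^o) => eps eps0.
have e2 : 0 < eps / 2 by rewrite divr_gt0.
near=> n.
have Hn : 1 / 2 ^+ n < eps / 2.
  by near: n; exact: (near_infty_natSinv_expn_lt (PosNum e2)).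
have dn : (d <= n)%N by near: n; exists d.
have hn : (0 < n)%N by apply: leq_trans dn; apply: ltnW.
apply: fin_bound Hn.
- by rewrite -natrX ler_nat -{1}(expn1 2) leq_exp2l.
- exact: lambdan_lb.
- exact: lambdan_ub.
Unshelve. all: by end_near.
Qed.
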